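(* Let $P\in\mathbb{R}_+^{n\times n}$ be a sub-stochastic out-connected matrix and $w\in\mathbb{R}^n_+$. Then for every $c\in\mathbb{R}^n$ the equation $x=S_0^w(P'x+c)$ has a unique solution $x\in\mathbb{R}^n$.
   Context: $P$ sub-stochastic: nonnegative with $P\mathbbm{1}\le\mathbbm{1}$. The graph $\mathcal G_P$ has node set $\{1,\dots,n\}$ and a directed link $(i,j)$ whenever $P_{ij}>0$. Let $\mathcal O=\{i:\,\sum_jP_{ij}<1\}$. $P$ is out-connected if $\mathcal O$ is nonempty and from every node of $\mathcal G_P$ there is a directed path to some node in $\mathcal O$. $(S_0^w(x))_i=\min\{\max\{x_i,0\},w_i\}$; $P'$ is the transpose. *)

(* Defs.v *)
From mathcomp Require Import all_boot all_order all_algebra.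
From mathcomp Require Import reals.
Set Implicit Arguments. Unset Strict Implicit. Unset Printing Implicit Defensive.
Import Order.TTheory GRing.Theory Num.Theory.
Local Open Scope ring_scope.

Definition substochastic {R : realType} {n : nat} (P : 'M[R]_n) : Prop :=
  (forall i j, 0 <= P i j) /\ (forall i, \sum_j P i j <= 1).

Definition linkP {R : realType} {n : nat} (P : 'M[R]_n) : rel 'I_n :=
  fun i j => 0 < P i j.

Definition outset {R : realType} {n : nat} (P : 'M[R]_n) : {set 'I_n} :=
  [set i | \sum_j P i j < 1].

Definition out_connected {R : realType} {n : nat} (P : 'M[R]_n) : Prop :=
  (outset P != set0) /\
  (forall i, exists2 o, o \in outset P & connect (linkP P) i o).

Definition S0 {R : realType} {n : nat} (w x : 'cV[R]_n) : 'cV[R]_n :=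
  \col_i Num.min (Num.max (x i 0) 0) (w i 0).

(* Main.v *)
Require Import Defs.
From mathcomp Require Import all_boot all_order all_algebra.
From mathcomp Require Import reals.
From mathcomp Require Import classical_sets.
From mathcomp Require Import lra.
Import Order.TTheory GRing.Theory Num.Theory.
Local Open Scope ring_scope.

Section Aux.
Variable R : realType.

Ltac cases := rewrite /Order.min /Order.max;
  repeat (match goal with |- context[if ?c then _ else _] =>
     lazymatch c with
     | context[if _ then _ else _] => fail
     | true => fail | false => fail
     | _ => let h := fresh in case: (boolP c) => h; try (rewrite -leNgt in h); cbv beta iota
     end end).

Lemma clamp_mono (a b w : R) : a <= b ->
  Num.min (Num.max a 0) w <= Num.min (Num.max b 0) w.
Proof. cases; move=> *; lra. Qed.

Lemma clamp_lip (a b w : R) : 0 <= w ->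
  `|Num.min (Num.max a 0) w - Num.min (Num.max b 0) w| <= `|a - b|.
Proof.
move=> w0; case: (lerP 0 (a - b)) => h; [rewrite (ger0_norm h)|rewrite (ltr0_norm h)];
 [case: (lerP 0 (Num.min (Num.max a 0) w - Num.min (Num.max b 0) w)) => h2;
   [rewrite (ger0_norm h2)|rewrite (ltr0_norm h2)]
 |case: (lerP 0 (Num.min (Num.max a 0) w - Num.min (Num.max b 0) w)) => h2;
   [rewrite (ger0_norm h2)|rewrite (ltr0_norm h2)]];
 move: h2 h w0; cases; move=> *; lra.
Qed.

Lemma clamp_bnd (a w : R) : 0 <= w ->
  0 <= Num.min (Num.max a 0) w /\ Num.min (Num.max a 0) w <= w.
Proof. cases; move=> *; split; lra. Qed.
End Aux.

Section Main.
Variables (R : realType) (n : nat) (P : 'M[R]_n) (w c : 'cV[R]_n).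
Hypothesis P0 : forall i j, 0 <= P i j.
Hypothesis w0 : forall i, 0 <= w i 0.

Definition T (x : 'cV[R]_n) := S0 w (P^T *m x + c).

Lemma TE (x : 'cV[R]_n) j : T x j 0 =
  Num.min (Num.max (\sum_i P i j * x i 0 + c j 0) 0) (w j 0).
Proof.
rewrite /T /S0 !mxE; congr (Num.min (Num.max (_ + _) _) _).
by apply: eq_bigr => i _; rewrite mxE.
Qed.

Lemma Tmono (x y : 'cV[R]_n) : (forall i, x i 0 <= y i 0) -> forall j, T x j 0 <= T y j 0.
Proof.
move=> xy j; rewrite !TE; apply: clamp_mono; rewrite lerD2r.
by apply: ler_sum => i _; apply: ler_wpM2l.
Qed.

Lemma Tbnd (x : 'cV[R]_n) j : 0 <= T x j 0 /\ T x j 0 <= w j 0.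
Proof. by rewrite TE; apply: clamp_bnd. Qed.

Lemma Tlip (x y : 'cV[R]_n) j :
  `|T x j 0 - T y j 0| <= \sum_i P i j * `|x i 0 - y i 0|.
Proof.
rewrite !TE; apply: le_trans (@clamp_lip R _ _ _ (w0 j)) _.
rewrite opprD addrACA subrr addr0 -sumrB.
apply: le_trans (ler_norm_sum _ _ _) _.
apply: ler_sum => i _; rewrite -mulrBr normrM ger0_norm //.
Qed.

Lemma T_fix : exists x, x = T x.
Proof.
pose E (j : 'I_n) := [set v : R | exists x : 'cV[R]_n,
   (forall i, x i 0 <= T x i 0) /\ v = x j 0]%classic.
have hs j : has_sup (E j).
  split.
    exists 0; exists 0; split => [i|]; last by rewrite mxE.
    by rewrite mxE; case: (Tbnd 0 i).
  exists (w j 0) => v [x [hx ->]]; apply: le_trans (hx j) _.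
  by case: (Tbnd x j).
pose xs := \col_j sup (E j).
have ub (x : 'cV[R]_n) : (forall i, x i 0 <= T x i 0) -> forall j, x j 0 <= xs j 0.
  move=> hx j; rewrite mxE; apply: (sup_upper_bound (hs j)).
  by exists x.
have h1 : forall j, xs j 0 <= T xs j 0.
  move=> j; rewrite [X in X <= _]mxE; apply: ge_sup; first by case: (hs j).
  move=> v [x [hx ->]]; apply: le_trans (hx j) _; apply: Tmono; exact: ub.
have h2 : forall j, T xs j 0 <= xs j 0.
  by apply: ub; apply: Tmono; exact: h1.
exists xs; apply/matrixP => i j; rewrite (ord1 j); apply/eqP.
by rewrite eq_le h1 h2.
Qed.

Lemma T_uniq (x y : 'cV[R]_n) : substochastic P -> out_connected P ->
  x = T x -> y = T y -> x = y.
Proof.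
move=> [_ rs] [_ oc] hx hy.
pose d i := `|x i 0 - y i 0|.
have hd j : d j <= \sum_i P i j * d i.
  by rewrite /d {1}hx {1}hy; exact: Tlip.
have d0 i : 0 <= d i by exact: normr_ge0.
pose r i := \sum_j P i j.
have key : \sum_j \sum_i P i j * d i = \sum_i d i * r i.
  rewrite exchange_big /=; apply: eq_bigr => i _.
  by rewrite /r mulr_sumr; apply: eq_bigr => j _; rewrite mulrC.
have Sd : \sum_j d j <= \sum_i d i * r i by rewrite -key; apply: ler_sum.
have Sr : \sum_i d i * r i <= \sum_i d i.
  by apply: ler_sum => i _; apply: ler_piMr; [exact: d0 | exact: rs].
have S1 : \sum_i d i * (1 - r i) = 0.
  apply/eqP; rewrite eq_le; apply/andP; split.
    rewrite (eq_bigr (fun i => d i - d i * r i)); last by move=> i _; rewrite mulrBr mulr1.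
    by rewrite sumrB subr_le0.
  by apply: sumr_ge0 => i _; apply: mulr_ge0 => //; rewrite subr_ge0; exact: rs.
have dO o : o \in outset P -> d o = 0.
  rewrite inE => ho.
  have hge : forall i, predT i -> 0 <= d i * (1 - r i).
    by move=> i _; apply: mulr_ge0 => //; rewrite subr_ge0; exact: rs.
  have /eqP := psumr_eq0P hge S1 (i:=o) isT.
  rewrite mulf_eq0 => /orP [/eqP //|]; rewrite subr_eq0 => /eqP h.
  by move: ho; rewrite -/(r o) -h ltxx.
have S2 : \sum_j (\sum_i P i j * d i - d j) = 0.
  apply/eqP; rewrite eq_le; apply/andP; split.
    by rewrite sumrB key subr_le0 (le_trans Sr).
  by apply: sumr_ge0 => j _; rewrite subr_ge0.
have eqj j : d j = \sum_i P i j * d i.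
  have hge : forall k, predT k -> 0 <= \sum_i P i k * d i - d k.
    by move=> k _; rewrite subr_ge0.
  have /eqP := psumr_eq0P hge S2 (i:=j) isT.
  by rewrite subr_eq0 => /eqP ->.
have prop i k : linkP P i k -> d k = 0 -> d i = 0.
  rewrite /linkP => hik dk.
  have : P i k * d i <= d k.
    rewrite [d k]eqj (bigD1 i) //= lerDl.
    by apply: sumr_ge0 => l _; apply: mulr_ge0.
  rewrite dk pmulr_rle0 // => hdi.
  by apply/eqP; rewrite eq_le hdi d0.
have all0 i : d i = 0.
  have [o ho hc] := oc i.
  move/connectP: hc => [p pth eo]; rewrite eo {eo} in ho.
  elim: p i pth ho => [|a p IH] i /=; first by move=> _; apply: dO.
  by move=> /andP [hia pth] ho; apply: (prop i a hia); apply: IH.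
apply/matrixP => i j; rewrite (ord1 j); apply/eqP.
by rewrite -subr_eq0 -normr_eq0; apply/eqP; apply: all0.
Qed.

End Main.

Theorem proposition3 (R : realType) (n : nat) (P : 'M[R]_n) (w : 'cV[R]_n) :
  substochastic P -> out_connected P -> (forall i, 0 <= w i 0) ->
  forall c : 'cV[R]_n, exists! x : 'cV[R]_n, x = S0 w (P^T *m x + c).
Proof.
move=> hs ho hw c.
have [x hx] := @T_fix R n P w c (proj1 hs) hw.
exists x; split; first exact: hx.
move=> y hy; exact: (@T_uniq R n P w c (proj1 hs) hw x y hs ho hx hy).
Qed.
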